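(* Let $\mathbf A$ be a finite subdirectly irreducible cBCK-algebra of height $n=\mathrm{h}(\mathbf A)$, let $k$ be a divisor of $n$ with $k\neq 1$ and $k\neq n$, and let $A_k=\{x\in A \mid k \text{ divides } \mathrm{h}(x)\}$. Then $A_k\cup \mathrm{m}(\mathbf A)$ is the universe of a subalgebra of $\mathbf A$ if and only if $\mathrm{b}(\mathbf A)\subseteq A_k$ and $\mathrm{m}(\mathbf A)\subseteq A_k$.
   Context: A BCK-algebra is an algebra $(A,\ominus,0)$ of type $(2,0)$ satisfying $((x\ominus y)\ominus(x\ominus z))\ominus(z\ominus y)=0$, $x\ominus 0=x$, $0\ominus x=0$, and ($x\ominus y=0$ and $y\ominus x=0$ imply $x=y$); it is ordered by $x\le y$ iff $x\ominus y=0$. A cBCK-algebra is a BCK-algebra satisfying $x\ominus(x\ominus y)=y\ominus(y\ominus x)$; its order is a meet-semilattice with $x\wedge y=x\ominus(x\ominus y)$. Finite subdirectly irreducible cBCK-algebras are, as posets, rooted trees with root $0$ (with a unique atom if nontrivial). For $a\in A$, the height is $\mathrm{h}(a)=|[0,a]|-1$, and $\mathrm{h}(\mathbf A)=\sup\{\mathrm{h}(a)\mid a\in A\}$. $\mathrm{m}(\mathbf A)$ is the set of maximal elements of $\mathbf A$. $\mathrm{b}(\mathbf A)$ is the set of branching elements: $b\in\mathrm{b}(\mathbf A)$ iff there exist $c,d\in A$ with $c,d>b$ and $c\wedge d=b$. *)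

(* Defs.v *)
From mathcomp Require Import all_boot.
Set Implicit Arguments. Unset Strict Implicit. Unset Printing Implicit Defensive.

Section BCK.
Variables (T : finType) (op : T -> T -> T) (z : T).

Definition is_BCK : Prop :=
  [/\ forall x y w, op (op (op x y) (op x w)) (op w y) = z,
      forall x, op x z = x,
      forall x, op z x = z &
      forall x y, op x y = z -> op y x = z -> x = y].

Definition is_cBCK : Prop :=
  is_BCK /\ forall x y, op x (op x y) = op y (op y x).

Definition ble (x y : T) : bool := op x y == z.
Definition blt (x y : T) : bool := (x != y) && ble x y.
Definition bmeet (x y : T) : T := op x (op x y).

(* congruences of the algebra (T, op, z) (0 is a constant, so only op matters) *)
Definition is_congruence (r : rel T) : Prop :=
  [/\ reflexive r, symmetric r, transitive r &
      forall x x' y y', r x x' -> r y y' -> r (op x y) (op x' y')].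

Definition subdirectly_irreducible : Prop :=
  1 < #|T| /\
  exists mu : rel T, is_congruence mu /\ (exists x y, mu x y /\ x <> y) /\
    forall th : rel T, is_congruence th -> (exists x y, th x y /\ x <> y) ->
      forall x y, mu x y -> th x y.

Definition height (a : T) : nat := #|[pred x | ble z x && ble x a]| - 1.
Definition alg_height : nat := \max_(a : T) height a.

Definition maximals : {set T} := [set x | [forall y, ble x y ==> (y == x)]].
Definition branching : {set T} :=
  [set b | [exists c, exists d, [&& blt b c, blt b d & bmeet c d == b]]].

Definition Ak (k : nat) : {set T} := [set x | k %| height x].

Definition is_subuniverse (S : {set T}) : Prop :=
  z \in S /\ forall x y, x \in S -> y \in S -> op x y \in S.

End BCK.

(* Main.v *)
Require Import Defs.
From mathcomp Require Import all_boot zify.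
Set Implicit Arguments. Unset Strict Implicit. Unset Printing Implicit Defensive.

Section Basics.
Variables (T : finType) (op : T -> T -> T) (z : T).
Hypothesis HC : is_cBCK op z.

Local Notation le := (ble op z).
Local Notation meet := (bmeet op).

Lemma ax1 x y w : op (op (op x y) (op x w)) (op w y) = z.
Proof. by move: HC => [[h1 h2 h3 h4] _]; auto. Qed.
Lemma ax2 x : op x z = x.
Proof. by move: HC => [[h1 h2 h3 h4] _]; auto. Qed.
Lemma ax3 x : op z x = z.
Proof. by move: HC => [[h1 h2 h3 h4] _]; auto. Qed.
Lemma ax4 x y : op x y = z -> op y x = z -> x = y.
Proof. by move: HC => [[h1 h2 h3 h4] _]; auto. Qed.
Lemma axC x y : op x (op x y) = op y (op y x).
Proof. by case: HC => _ ->. Qed.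

Lemma leE x y : le x y = (op x y == z). Proof. by []. Qed.

Lemma opxx x : op x x = z.
Proof. by have := ax1 x z z; rewrite !ax2. Qed.
Lemma le_refl x : le x x.
Proof. by rewrite leE opxx. Qed.
Lemma le0 x : le z x.
Proof. by rewrite leE ax3. Qed.
Lemma le_anti x y : le x y -> le y x -> x = y.
Proof. by rewrite !leE => /eqP h1 /eqP h2; apply: ax4. Qed.
Lemma le_trans x y w : le x y -> le y w -> le x w.
Proof.
rewrite !leE => /eqP h1 /eqP h2.
by have := ax1 x w y; rewrite h1 h2 !ax2 => ->.
Qed.
Lemma le_antiR x y w : le x y -> le (op w y) (op w x).
Proof. by rewrite !leE => /eqP h; have := ax1 w y x; rewrite h ax2 => ->. Qed.
Lemma le_monoL x y w : le x y -> le (op x w) (op y w).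
Proof. by rewrite !leE => /eqP h; have := ax1 x w y; rewrite h ax2 => ->. Qed.
Lemma le_sub x y : le (op x y) x.
Proof. by have := le_antiR x (le0 y); rewrite ax2. Qed.
Lemma le_meetr x y : le (op x (op x y)) y.
Proof. by rewrite leE; have := ax1 x z y; rewrite !ax2 => ->. Qed.
Lemma le_exch x y w : le (op (op x y) w) (op (op x w) y).
Proof.
apply: (le_trans (le_antiR (op x y) (le_meetr x w))).
by rewrite leE ax1.
Qed.
Lemma exch x y w : op (op x y) w = op (op x w) y.
Proof. by apply: le_anti; apply: le_exch. Qed.
Lemma le0E x : le x z -> x = z.
Proof. by move=> h; apply: le_anti h (le0 x). Qed.

Lemma meetC x y : meet x y = meet y x.
Proof. by rewrite /bmeet axC. Qed.
Lemma meet_l x y : le (meet x y) x.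
Proof. exact: le_sub. Qed.
Lemma meet_r x y : le (meet x y) y.
Proof. exact: le_meetr. Qed.
Lemma meet_le x y : le x y -> meet x y = x.
Proof. by rewrite leE /bmeet => /eqP ->; rewrite ax2. Qed.
Lemma meet_glb w x y : le w x -> le w y -> le w (meet x y).
Proof.
move=> hx hy; have := le_antiR x (le_antiR x hy).
by rewrite -/(bmeet op x w) meetC meet_le.
Qed.
Lemma invol a t : le t a -> op a (op a t) = t.
Proof. by move=> h; rewrite -/(bmeet op a t) meetC meet_le. Qed.
Lemma sub_meet x y : op x y = op x (meet x y).
Proof.
rewrite /bmeet -/(bmeet op x (op x y)) meetC meet_le //.
exact: le_sub.
Qed.
Lemma sub_le_res x y w : le (op x y) w -> le (op x w) y.
Proof. by rewrite !leE exch. Qed.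

Definition dn (a : T) := [pred x | le z x && le x a].

Lemma in_dn x a : (x \in dn a) = le x a.
Proof. by rewrite inE le0. Qed.

Lemma card_dn_strict s t : le s t -> s != t -> #|dn s| < #|dn t|.
Proof.
move=> hst hne; rewrite [X in _ < X](cardD1 t) in_dn le_refl add1n ltnS.
apply: subset_leq_card; apply/subsetP => x; rewrite !inE !le0 /= => h.
rewrite (le_trans h hst) andbT; apply/negP => /eqP hx; subst x.
by move/eqP: hne; apply; apply: le_anti.
Qed.

Lemma dn_eq s t : le s t -> #|dn t| <= #|dn s| -> s = t.
Proof.
move=> hst hc; case: (eqVneq s t) => // hne.
by have := card_dn_strict hst hne; rewrite ltnNge hc.
Qed.

Lemma card_dn_gt0 a : 0 < #|dn a|.
Proof. by apply/card_gt0P; exists a; rewrite in_dn le_refl. Qed.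

Definition ideal (I : pred T) := I z /\ forall t u, I (op t u) -> I u -> I t.

Lemma ideal_down I t u : ideal I -> I u -> le t u -> I t.
Proof. by case=> h0 hI hu /eqP htu; apply: (hI t u) => //; rewrite htu. Qed.

Lemma ideal_cong I : ideal I -> is_congruence op (fun x y => I (op x y) && I (op y x)).
Proof.
move=> hid; have [h0 hI] := hid.
have tr : forall x y w, I (op x y) -> I (op y w) -> I (op x w).
  move=> x y w h1 h2; apply: (hI _ (op x y)) => //.
  by apply: (ideal_down hid h2); rewrite leE ax1.
split.
- by move=> x; rewrite opxx h0.
- by move=> x y; rewrite andbC.
- move=> y x w /andP[h1 h2] /andP[h3 h4]; apply/andP; split; first exact: tr h1 h3.
  exact: tr h4 h2.
- move=> x x' y y' /andP[h1 h2] /andP[h3 h4].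
  have s1 : forall a b c, I (op a b) -> I (op (op a c) (op b c)).
    move=> a b c hab; apply: (ideal_down hid hab); apply: sub_le_res.
    by rewrite leE ax1.
  have s2 : forall a b c, I (op b c) -> I (op (op a c) (op a b)).
    move=> a b c hbc; apply: (ideal_down hid hbc).
    by rewrite leE ax1.
  apply/andP; split.
  + apply: (tr _ (op x' y)); first exact: s1.
    exact: s2.
  + apply: (tr _ (op x' y)); first exact: s2.
    exact: s1.
Qed.

Definition atom (e : T) := e != z /\ forall t, le t e -> t = z \/ t = e.

Lemma atom_ideal e : atom e -> ideal (fun t => ~~ le e t).
Proof.
case=> hez ha; split.
  by apply/negP => /le0E; move/eqP: hez.
move=> t u h1 h2; apply/negP => het; move/negP: h1; apply.
have : le (op e u) e by apply: le_sub.
case/ha => [heu|heu].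
  by rewrite leE heu eqxx in h2.
by rewrite -{1}heu; apply: le_monoL.
Qed.

Lemma exists_atom w : w != z -> exists e, atom e /\ le e w.
Proof.
move=> hw.
pose P := fun s => (s != z) && le s w.
have Pw : P w by rewrite /P hw le_refl.
case: (arg_minnP (fun s => #|dn s|) Pw) => e /andP[hez hew] hmin.
exists e; split => //; split => // t hte.
case: (eqVneq t z) => [->|htz]; first by left.
right; apply: dn_eq => //; apply: hmin.
by rewrite /P htz (le_trans hte hew).
Qed.

Hypothesis HSI : subdirectly_irreducible op.

Lemma SI_w : exists w, w != z /\ forall I, ideal I -> (exists t, I t /\ t <> z) -> I w.
Proof.
case: HSI => _ [mu [_ [[x0 [y0 [hmu hne]]] hmin]]].
have key : forall I, ideal I -> (exists t, I t /\ t <> z) -> I (op x0 y0) && I (op y0 x0).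
  move=> I hI [t [ht htz]]; apply: (hmin _ (ideal_cong hI)) => //.
  exists t, z; split => //; rewrite ax2 ?ax3 //; have [h0 _] := hI.
  by rewrite ht h0.
case: (eqVneq (op x0 y0) z) => h1.
  case: (eqVneq (op y0 x0) z) => h2.
    by case: hne; apply: ax4.
  exists (op y0 x0); split => // I hI hex.
  by case/andP: (key I hI hex).
exists (op x0 y0); split => // I hI hex.
by case/andP: (key I hI hex).
Qed.

Lemma atom_uniq e1 e2 : atom e1 -> atom e2 -> e1 = e2.
Proof.
move=> a1 a2; apply/eqP/negPn/negP => hne.
have [w [hw hwI]] := SI_w.
have other : forall e, atom e -> exists e', atom e' /\ e' != e.
  move=> e ae; case: (eqVneq e e1) => [->|h].
    by exists e2; split => //; rewrite eq_sym.
  by exists e1; split => //; rewrite eq_sym.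
have [e [ae hew]] := exists_atom hw.
have [e' [ae' hne']] := other e ae.
have := hwI _ (atom_ideal ae).
have -> : ~~ le e w = false by rewrite hew.
move=> H; suff : false by [].
apply: H; exists e'; split.
  apply/negP => hee'; case: ae' => _ /(_ e hee') [h|h].
    by case: ae => /eqP.
  by move/eqP: hne'; rewrite h.
by case: ae' => /eqP.
Qed.


Lemma exists_cover x a : le x a -> x != a -> exists x',
  [/\ le x x', le x' a, x' != a & forall t, le x' t -> le t a -> t = x' \/ t = a].
Proof.
move=> hxa hne.
pose P := fun s => [&& le x s, le s a & s != a].
have Px : P x by rewrite /P le_refl hxa hne.
case: (arg_maxnP (fun s => #|dn s|) Px) => c /and3P[h1 h2 h3] hmax.
exists c; split => // t hct hta.
case: (eqVneq t a) => [->|hta']; first by right.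
left; apply/esym/dn_eq => //; apply: hmax.
by rewrite /P (le_trans h1 hct) hta hta'.
Qed.

Lemma Natom a x : le x a -> x != a ->
  (forall t, le x t -> le t a -> t = x \/ t = a) -> atom (op a x).
Proof.
move=> hxa hne hcov; split.
  apply/negP => /eqP h; move/eqP: hne; apply; apply: le_anti => //.
  by rewrite leE h.
move=> t ht.
have hta : le t a := le_trans ht (le_sub a x).
have : le x (op a t).
  by have := le_antiR a ht; rewrite invol.
move/hcov => /(_ (le_sub a t)) [h|h].
  by right; rewrite -h invol.
by left; rewrite -(invol hta) h opxx.
Qed.

Lemma chain_aux n : forall a, #|dn a| <= n -> forall x y, le x a -> le y a -> le x y || le y x.
Proof.
elim: n => [|n IH] a ha x y hx hy.
  by have := card_dn_gt0 a; rewrite ltnNge ha.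
case: (eqVneq x a) => [->|hxa]; first by rewrite hy orbT.
case: (eqVneq y a) => [->|hya]; first by rewrite hx.
have [x' [hx1 hx2 hx3 hx4]] := exists_cover hx hxa.
have [y' [hy1 hy2 hy3 hy4]] := exists_cover hy hya.
case: (eqVneq x' y') => [e|hne].
  subst y'; apply: (IH x') => //.
  by rewrite -ltnS; apply: leq_trans ha; apply: card_dn_strict.
have := atom_uniq (Natom hx2 hx3 hx4) (Natom hy2 hy3 hy4).
by move=> h; move/eqP: hne; case; rewrite -(invol hx2) h invol.
Qed.

Lemma chain a x y : le x a -> le y a -> le x y || le y x.
Proof. exact: chain_aux. Qed.


Local Notation h := (height op z).

Lemma hE t : h t = #|[set s | le s t]| - 1.
Proof. by rewrite /height; congr (_ - _); apply: eq_card => s; rewrite !inE le0. Qed.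

Lemma card_set_gt0 t : 0 < #|[set s | le s t]|.
Proof. by apply/card_gt0P; exists t; rewrite inE le_refl. Qed.

Lemma h_sub a t : le t a -> h (op a t) = h a - h t.
Proof.
move=> hta.
pose B := [set s | le t s && le s a].
have e1 : [set s | le s (op a t)] = (op a) @: B.
  apply/setP => s; rewrite inE; apply/idP/imsetP.
    move=> hs; have hsa : le s a := le_trans hs (le_sub a t).
    exists (op a s); last by rewrite invol.
    rewrite inE le_sub andbT.
    by have := le_antiR a hs; rewrite invol.
  by case=> u; rewrite inE => /andP[h1 h2] ->; apply: le_antiR.
have c1 : #|[set s | le s (op a t)]| = #|B|.
  rewrite e1 card_in_imset // => u v; rewrite !inE => /andP[_ hu] /andP[_ hv] e.
  by rewrite -(invol hu) e invol.
have e2 : [set s | le s t] :|: B = [set s | le s a].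
  apply/setP => s; rewrite !inE; apply/idP/idP.
    by case/orP => [hs|/andP[_ ->]] //; apply: le_trans hs hta.
  move=> hs; case/orP: (chain hs hta) => [->//|->]; by rewrite hs orbT.
have e3 : [set s | le s t] :&: B = [set t].
  apply/setP => s; rewrite !inE; apply/idP/idP.
    by case/and3P => h1 h2 _; apply/eqP; apply: le_anti.
  by move/eqP => ->; rewrite le_refl hta.
have := cardsUI [set s | le s t] B; rewrite e2 e3 cards1.
rewrite !hE c1.
have := card_set_gt0 t; have := card_set_gt0 (op a t); rewrite c1.
lia.
Qed.


Lemma h_mono s t : le s t -> h s <= h t.
Proof.
move=> hst; rewrite !hE leq_sub2r //; apply: subset_leq_card.
by apply/subsetP => x; rewrite !inE => hx; apply: le_trans hx hst.
Qed.

Lemma h_strict s t : le s t -> s != t -> h s < h t.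
Proof.
move=> hst hne; have := card_dn_strict hst hne; have := card_dn_gt0 s.
rewrite /height /dn; lia.
Qed.

Lemma h0 : h z = 0.
Proof.
rewrite hE (_ : [set s | le s z] = [set z]) ?cards1 //.
apply/setP => s; rewrite !inE; apply/idP/eqP; first exact: le0E.
by move=> ->; rewrite le_refl.
Qed.

Lemma h_pos t : t != z -> 0 < h t.
Proof. by move=> ht; rewrite -h0; apply: h_strict; [apply: le0 | rewrite eq_sym]. Qed.

Lemma h_op x y : h (op x y) = h x - h (meet x y).
Proof. by rewrite sub_meet h_sub // meet_l. Qed.

Lemma h_exists a j : j <= h a -> exists t, le t a /\ h t = j.
Proof.
move=> hj.
pose D := [set s | le s a].
pose f := fun s => (inord (h s) : 'I_(h a).+1).
have hfD : {in D &, injective f}.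
  move=> s t; rewrite !inE => hs ht /(congr1 (@nat_of_ord _)).
  rewrite /f !inordK ?ltnS ?h_mono // => e.
  case: (eqVneq s t) => // hne.
  case/orP: (chain hs ht) => hst.
    by have := h_strict hst hne; rewrite e ltnn.
  by have := h_strict hst (contra_neq esym hne); rewrite e ltnn.
have cD : #|D| = (h a).+1.
  by rewrite hE; have := card_set_gt0 a; rewrite /D; lia.
have : f @: D = setT.
  apply/eqP; rewrite eqEcard subsetT /= cardsT card_ord card_in_imset //.
  by rewrite cD.
move/setP/(_ (inord j)); rewrite inE => /imsetP [t]; rewrite inE => ht e.
exists t; split => //.
have := congr1 (@nat_of_ord _) e; rewrite /f !inordK //; last by rewrite ltnS h_mono.
Qed.


Local Notation M := (maximals op z).
Local Notation n := (alg_height op z).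

Lemma maxE m y : m \in M -> le m y -> y = m.
Proof. by rewrite inE => /forallP /(_ y) /implyP H /H /eqP. Qed.

Lemma exists_max c : exists m, m \in M /\ le c m.
Proof.
have Pc : le c c := le_refl c.
case: (arg_maxnP h Pc) => m hcm hmax.
exists m; split => //; rewrite inE; apply/forallP => y; apply/implyP => hmy.
apply/negPn/negP => hne.
have H1 := hmax y (le_trans hcm hmy).
have H2 : h m < h y by apply: h_strict; rewrite // eq_sym.
by move: H1 H2 => /=; lia.
Qed.

Lemma h_le_n t : h t <= n.
Proof. rewrite /alg_height; exact: (@leq_bigmax T (fun a => height op z a) t). Qed.

Lemma exists_top : exists a, h a = n.
Proof.
have [|a ha] := @eq_bigmax T (fun a => height op z a).
  by apply/card_gt0P; exists z.
by exists a; rewrite /alg_height ha.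
Qed.


Lemma n_pos : 0 < n.
Proof.
case: HSI => _ [mu [_ [[x0 [y0 [_ hne]]] _]]].
have [t ht] : exists t, t != z.
  case: (eqVneq x0 z) => [e|h]; last by exists x0.
  by exists y0; apply/eqP => e'; apply: hne; rewrite e e'.
exact: leq_trans (h_pos ht) (h_le_n t).
Qed.

Lemma inAk k x : (x \in Ak op z k) = (k %| h x).
Proof. by rewrite inE. Qed.

Ltac clia := repeat match goal with
  | H : is_true (leq _ _) |- _ => revert H
  | H : @eq nat _ _ |- _ => revert H
  end; clear; lia.

Lemma main_aux k : k %| n -> k <> 1 ->
  (is_subuniverse op z (Ak op z k :|: M) <->
   (branching op z \subset Ak op z k /\ M \subset Ak op z k)).
Proof.
move=> hkn hk1.
have npos := n_pos.
have kpos : 0 < k.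
  by case: k hkn hk1 => //; rewrite dvd0n => /eqP hn; move: npos; rewrite hn.
have hkn' : k <= n := dvdn_leq npos hkn.
split.
- case=> hz hcl.
  have HM : M \subset Ak op z k.
    apply/subsetP => m hm; rewrite inAk; apply/negPn/negP => hnd.
    have mz : m != z by apply/eqP => e; move: hnd; rewrite e h0 dvdn0.
    have Sm : m \in Ak op z k :|: M by rewrite inE hm orbT.
    case: (ltnP (h m) k) => hmk.
    + have [a ha] := exists_top.
      have [y [hya hy]] : exists y, le y a /\ h y = k by apply: h_exists; rewrite ha.
      have Sy : y \in Ak op z k :|: M by rewrite inE inAk hy dvdnn.
      have yz : y != z by apply/eqP => e; move: hy; rewrite e h0 => e'; move: kpos; rewrite -e'.
      have [e1 [a1 he1]] := exists_atom yz.
      have [e2 [a2 he2]] := exists_atom mz.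
      have e12 := atom_uniq a1 a2; subst e2.
      have hmeet : le e1 (meet y m) by apply: meet_glb.
      have mnz : meet y m != z.
        apply/eqP => e; rewrite e in hmeet; have := le0E hmeet; case: a1 => /eqP //.
      have r1 := h_pos mnz.
      have r2 : h (meet y m) <= h m by apply: h_mono; apply: meet_r.
      have := hcl _ _ Sy Sm; rewrite inE inAk h_op hy => /orP [hd|hM].
        have hpos : 0 < k - h (meet y m) by clia.
        have := dvdn_leq hpos hd; clia.
      have := maxE hM (le_sub y m) => e.
      have := congr1 h e; rewrite h_op hy; clia.
    + have [y [hym hy]] : exists y, le y m /\ h y = h m %/ k * k.
        by apply: h_exists; apply: leq_trunc_div.
      have Sy : y \in Ak op z k :|: M by rewrite inE inAk hy dvdn_mull.
      have hr : h (op m y) = h m %% k.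
        by rewrite h_sub // hy {1}(divn_eq (h m) k) addKn.
      have r0 : 0 < h m %% k by rewrite lt0n; apply: contra hnd.
      have r1 : h m %% k < k by apply: ltn_pmod.
      have := hcl _ _ Sm Sy; rewrite inE inAk hr => /orP [hd|hM].
        have := dvdn_leq r0 hd; clia.
      have := maxE hM (le_sub m y) => e.
      have := congr1 h e; rewrite hr; clia.
  split => //.
  apply/subsetP => b; rewrite inE => /existsP [c /existsP [d /and3P [hbc hbd /eqP hcd]]].
  case/andP: hbc => nbc lbc; case/andP: hbd => nbd lbd.
  have [c' [Mc lcc]] := exists_max c.
  have [d' [Md ldd]] := exists_max d.
  have Sc : c' \in Ak op z k :|: M by rewrite inE Mc orbT.
  have Sd : d' \in Ak op z k :|: M by rewrite inE Md orbT.
  have incomp : ~~ le c d && ~~ le d c.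
    apply/andP; split; apply/negP => hle.
      by move: nbc; rewrite -hcd meet_le // eqxx.
    by move: nbd; rewrite -hcd meetC meet_le // eqxx.
  case/andP: incomp => ncd ndc.
  have g1 : le (meet c' d') c.
    case/orP: (chain lcc (meet_l c' d')) => // hcg.
    have hcd' : le c d' := le_trans hcg (meet_r c' d').
    by case/orP: (chain hcd' ldd) => h'; [move: ncd | move: ndc]; rewrite h'.
  have g2 : le (meet c' d') d.
    case/orP: (chain ldd (meet_r c' d')) => // hdg.
    have hdc' : le d c' := le_trans hdg (meet_l c' d').
    by case/orP: (chain hdc' lcc) => h'; [move: ndc | move: ncd]; rewrite h'.
  have hg : meet c' d' = b.
    apply: le_anti; first by rewrite -hcd; apply: meet_glb.
    by apply: meet_glb; [apply: le_trans lbc lcc | apply: le_trans lbd ldd].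
  have hkc : k %| h c' by rewrite -inAk; apply: (subsetP HM).
  have hbc' : h b <= h c' by apply: h_mono; rewrite -hg meet_l.
  rewrite inAk; apply/negPn/negP => hnd.
  have := hcl _ _ Sc Sd; rewrite inE inAk h_op hg => /orP [hd|hM].
    by move: hd; rewrite dvdn_subr // => /(negP hnd).
  have := maxE hM (le_sub c' d') => e.
  have := congr1 h e; rewrite h_op hg => e'.
  have hb0 : h b = 0 by clia.
  by move: hnd; rewrite hb0 dvdn0.
- case=> HB HM; split; first by rewrite inE inAk h0 dvdn0.
  have toAk : forall x, x \in Ak op z k :|: M -> k %| h x.
    move=> x; rewrite inE => /orP [|hx]; first by rewrite inAk.
    by rewrite -inAk; apply: (subsetP HM).
  move=> x y /toAk hx /toAk hy; rewrite inE inAk; apply/orP; left.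
  case: (boolP (le x y)) => hxy.
    by move: hxy; rewrite leE => /eqP ->; rewrite h0 dvdn0.
  case: (boolP (le y x)) => hyx.
    by rewrite h_sub // dvdn_sub.
  rewrite h_op dvdn_sub // -inAk; apply: (subsetP HB).
  rewrite inE; apply/existsP; exists x; apply/existsP; exists y.
  rewrite /blt meet_l meet_r eqxx !andbT; apply/andP; split.
    by apply/eqP => e; move: hxy; rewrite -e meet_r.
  by apply/eqP => e; move: hyx; rewrite -e meet_l.
Qed.

End Basics.

Theorem mainTheorem2 (T : finType) (op : T -> T -> T) (z : T) (k : nat) :
  is_cBCK op z ->
  subdirectly_irreducible op ->
  k %| alg_height op z ->
  k <> 1 ->
  k <> alg_height op z ->
  (is_subuniverse op z (Ak op z k :|: maximals op z) <->
   (branching op z \subset Ak op z k /\ maximals op z \subset Ak op z k)).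
Proof. by move=> HC HSI hk hk1 _; apply: main_aux. Qed.
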